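(* Let $G$ be an l.c.s.c. group, $p\geq 1$, and let $B\hookrightarrow A\twoheadrightarrow A/B$ be an exact sequence of Polish Abelian groups ($B$ a closed subgroup of $A$). Then every almost type-I function $f:G^p\to A/B$ which is regular at the identity has a lift $\hat f:G^p\to A$ (i.e. $\hat f$ composed with the quotient map equals $f$) which is almost type-I and regular at the identity. If $G$ is an algebraic subgroup of some $\mathrm{GL}_n(\mathbb{R})$, the same holds with ''type-II'' in place of ''type-I''.
   Context: For $X=G^p$ with Haar measure $\mu$ and $A$ a Polish Abelian group: a map $f:X\to A$ is of type I if it is locally finite-valued and locally constant on some open set of full $\mu$-measure; almost type-I if it is a locally uniform limit (uniform on compact sets) of type-I functions. When $G\le \mathrm{GL}_n(\mathbb{R})$ is algebraic, $f$ is of type II if it is locally finite-valued with level sets agreeing locally with semi-algebraic subsets of $G^p\subseteq M_{n\times n}(\mathbb{R})^p$; almost type-II means a locally uniform limit of type-II functions. An almost type-I (resp. II) $f$ is regular at $x_0$ if it is a locally uniform limit of type-I (resp. II) functions each locally constant on a neighbourhood of $x_0$. *)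

(* Defs.v *)
From HB Require Import structures.
From mathcomp Require Import all_boot all_order all_algebra.
From mathcomp Require Import all_classical all_reals all_analysis.

Set Implicit Arguments.
Unset Strict Implicit.
Unset Printing Implicit Defensive.

Import Order.TTheory GRing.Theory Num.Theory.
Import numFieldTopology.Exports.
Local Open Scope classical_set_scope.
Local Open Scope ring_scope.

Definition topological_group (G : topologicalType) (mul : G -> G -> G)
    (inv : G -> G) (one : G) : Prop :=
  [/\ associative mul, left_id one mul /\ right_id one mul,
      left_inverse one inv mul /\ right_inverse one inv mul,
      continuous (fun xy : G * G => mul xy.1 xy.2) & continuous inv].

Definition lcsc_group (G : topologicalType) (mul : G -> G -> G)
    (inv : G -> G) (one : G) : Prop :=
  [/\ topological_group mul inv one, hausdorff_space G,
      locally_compact [set: G] & @second_countable G].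

Definition gpow (G : topologicalType) (p : nat) := {ptws 'I_p -> G}.

Definition pmul (G : topologicalType) (p : nat) (mul : G -> G -> G)
  (x y : gpow G p) : gpow G p := fun i => mul (x i) (y i).

Definition pone (G : topologicalType) (p : nat) (one : G) : gpow G p :=
  fun _ => one.

Definition borel (X : topologicalType) : set (set X) := <<s open >>.

Definition haar_measure (R : realType) (X : topologicalType)
    (mul : X -> X -> X) (mu : set X -> \bar R) : Prop :=
  [/\ mu set0 = 0%E /\ (forall E, borel E -> (0 <= mu E)%E),
      (forall F : nat -> set X, (forall k, borel (F k)) -> trivIset setT F ->
          (fun k => \sum_(0 <= i < k) mu (F i))%E @ \oo --> mu (\bigcup_k F k)),
      (forall g E, borel E -> mu (mul g @` E) = mu E),
      (forall K, compact K -> (mu K < +oo)%E)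
    & (forall U, open U -> U !=set0 -> (0 < mu U)%E)].

Definition compatible_metric (R : realType) (T : topologicalType)
    (d : T -> T -> R) : Prop :=
  [/\ (forall x y, 0 <= d x y), (forall x y, d x y = 0 <-> x = y),
      (forall x y, d x y = d y x),
      (forall x y z, d x z <= d x y + d y z)
    & (forall (x : T) (U : set T),
          nbhs x U <-> exists2 e : R, 0 < e & [set y | d x y < e] `<=` U)].

Definition complete_metric (R : realType) (T : Type) (d : T -> T -> R) : Prop :=
  forall u : nat -> T,
    (forall e : R, 0 < e -> exists N, forall m k, (N <= m)%N -> (N <= k)%N ->
        d (u m) (u k) < e) ->
    exists l, forall e : R, 0 < e -> exists N, forall k, (N <= k)%N -> d (u k) l < e.

Definition polish (R : realType) (T : topologicalType) : Prop :=
  (exists D : set T, countable D /\ dense D) /\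
  (exists d : T -> T -> R, compatible_metric d /\ complete_metric d).

(* q : A -> C realizes C as the quotient topological group A / ker q *)
Definition quotient_map (A C : topologicalZmodType) (q : A -> C) : Prop :=
  [/\ (forall x y, q (x - y) = q x - q y), continuous q,
      (forall c, exists a, q a = c)
    & (forall U : set A, open U -> open (q @` U))].

Section Types.
Variables (X : topologicalType) (A : topologicalZmodType).

Definition locally_finite_valued (f : X -> A) : Prop :=
  forall x : X, exists2 U, nbhs x U & finite_set (f @` U).

Definition locally_constant_on (U : set X) (f : X -> A) : Prop :=
  forall x, U x -> \forall y \near x, f y = f x.

Definition locally_uniform_limit (fs : nat -> X -> A) (f : X -> A) : Prop :=
  forall K : set X, compact K -> forall V : set A, nbhs (0 : A) V ->
    \forall k \near \oo, forall x, K x -> V (fs k x - f x).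

Definition typeI (R : realType) (mu : set X -> \bar R) (f : X -> A) : Prop :=
  locally_finite_valued f /\
  exists U : set X, [/\ open U, mu (~` U) = 0%E & locally_constant_on U f].

Definition almost_regular (P : (X -> A) -> Prop) (f : X -> A) (x0 : X) : Prop :=
  exists fs : nat -> X -> A,
    (forall k, P (fs k) /\ exists2 V, nbhs x0 V & locally_constant_on V (fs k))
    /\ locally_uniform_limit fs f.

End Types.

Inductive polyfun (R : pzRingType) (I : Type) : ((I -> R) -> R) -> Prop :=
  | polyfun_const (c : R) : polyfun (fun _ => c)
  | polyfun_coord (i : I) : polyfun (fun x => x i)
  | polyfun_add P Q : polyfun P -> polyfun Q -> polyfun (fun x => P x + Q x)
  | polyfun_mul P Q : polyfun P -> polyfun Q -> polyfun (fun x => P x * Q x).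

Inductive semialgebraic (R : realType) (I : Type) : set (I -> R) -> Prop :=
  | semialg_basic P : polyfun P -> semialgebraic [set x | 0 < P x]
  | semialg_compl S : semialgebraic S -> semialgebraic (~` S)
  | semialg_union S T : semialgebraic S -> semialgebraic T ->
      semialgebraic (S `|` T).

(* iota : G -> M_n(R) is an isomorphism of topological groups onto an
   algebraic subgroup of GL_n(R) *)
Definition algebraic_embedding (R : realType) (G : topologicalType)
    (mul : G -> G -> G) (n : nat) (iota : G -> 'M[R]_n) : Prop :=
  [/\ injective iota,
      (forall g h, iota (mul g h) = iota g *m iota h),
      continuous iota,
      (forall U : set G, open U ->
          exists2 W : set 'M[R]_n, open W & iota @` U = range iota `&` W)
    & exists Ps : set ((('I_n * 'I_n) -> R) -> R),
        Ps `<=` @polyfun R ('I_n * 'I_n) /\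
        range iota = [set M : 'M[R]_n | M \in unitmx /\
                        forall P, Ps P -> P (fun ij => M ij.1 ij.2) = 0]].

Definition gcoords (R : realType) (G : topologicalType) (p n : nat)
    (iota : G -> 'M[R]_n) (x : gpow G p) : ('I_p * 'I_n * 'I_n) -> R :=
  fun t => iota (x t.1.1) t.1.2 t.2.

Definition typeII (R : realType) (G : topologicalType) (p n : nat)
    (iota : G -> 'M[R]_n) (A : topologicalZmodType) (f : gpow G p -> A) : Prop :=
  locally_finite_valued f /\
  forall (a : A) (x : gpow G p), exists2 V, nbhs x V &
    exists2 S : set ('I_p * 'I_n * 'I_n -> R), semialgebraic S &
      V `&` f @^-1` [set a] = V `&` [set y | S (gcoords iota y)].

(* Main.v *)
Require Import Defs.
From HB Require Import structures.
From mathcomp Require Import all_boot all_order all_algebra.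
From mathcomp Require Import all_classical all_reals all_analysis.
From mathcomp Require Import lra.
Import Order.TTheory GRing.Theory Num.Theory.
Import numFieldTopology.Exports.
Local Open Scope classical_set_scope.
Local Open Scope ring_scope.

Set Implicit Arguments.
Unset Strict Implicit.
Unset Printing Implicit Defensive.
Set Implicit Arguments.
Unset Strict Implicit.
Unset Printing Implicit Defensive.

Section Generic.
Variable X : topologicalType.

Definition lfv (T : Type) (f : X -> T) : Prop :=
  forall x : X, exists2 U, nbhs x U & finite_set (f @` U).

Definition lcon (T : Type) (U : set X) (f : X -> T) : Prop :=
  forall x, U x -> \forall y \near x, f y = f x.

Lemma lfv_comb (T1 T2 T3 : Type) (u : X -> T1) (v : X -> T2) (F : T1 -> T2 -> T3) :
  lfv u -> lfv v -> lfv (fun x => F (u x) (v x)).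
Proof.
move=> hu hv x; have [U1 nU1 fU1] := hu x; have [U2 nU2 fU2] := hv x.
exists (U1 `&` U2); first exact: filterI.
apply: (sub_finite_set _ (finite_image2 F fU1 fU2)).
by move=> _ [y [U1y U2y] <-]; exists (u y); [by exists y|exists (v y) => //; exists y].
Qed.

Lemma lcon_comb (T1 T2 T3 : Type) (U1 U2 : set X) (u : X -> T1) (v : X -> T2)
  (F : T1 -> T2 -> T3) :
  lcon U1 u -> lcon U2 v -> lcon (U1 `&` U2) (fun x => F (u x) (v x)).
Proof.
move=> hu hv x [U1x U2x]; have Hu := hu x U1x; have Hv := hv x U2x.
by near=> y; rewrite (near Hu y) // (near Hv y).
Unshelve. all: by end_near.
Qed.

Definition reg (T : Type) (x0 : X) (f : X -> T) : Prop :=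
  exists2 V, nbhs x0 V & lcon V f.

Lemma reg_comb (T1 T2 T3 : Type) x0 (u : X -> T1) (v : X -> T2) (F : T1 -> T2 -> T3) :
  reg x0 u -> reg x0 v -> reg x0 (fun x => F (u x) (v x)).
Proof.
move=> [V1 n1 h1] [V2 n2 h2]; exists (V1 `&` V2); first exact: filterI.
exact: lcon_comb.
Qed.

End Generic.

Section Measure.
Variables (R : realType) (X : topologicalType) (mul : X -> X -> X)
  (mu : set X -> \bar R).
Hypothesis hmu : haar_measure mul mu.

Lemma borel_open (U : set X) : open U -> borel U.
Proof. by move=> oU; apply: sub_sigma_algebra. Qed.

Lemma borel_C (U : set X) : borel U -> borel (~` U).
Proof. by move=> bU; rewrite -setTD; apply: sigma_algebraCD. Qed.

Lemma borel_I (U V : set X) : borel U -> borel V -> borel (U `&` V).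
Proof.
move=> bU bV; rewrite -[U `&` V]setCK setCI; apply: borel_C.
have -> : ~` U `|` ~` V = \bigcup_k (if k == 0%N then ~` U else ~` V).
  apply/seteqP; split => x.
    by case=> h; [exists 0%N|exists 1%N].
  by case=> -[|k] _ /=; [left|right].
apply: sigma_algebra_bigcup => -[|k] /=; exact: borel_C.
Qed.

Lemma mu_add2 (A B : set X) : borel A -> borel B -> A `&` B = set0 ->
  mu (A `|` B) = (mu A + mu B)%E.
Proof.
case: hmu => -[mu0 mupos] sadd _ _ _ bA bB AB.
pose F := fun k => if k == 0%N then A else if k == 1%N then B else set0.
have bF : forall k, borel (F k).
  move=> [|[|k]] //=; rewrite /F /=; apply: sub_sigma_algebra.
  exact: open0.
have tF : trivIset setT F.
  move=> i j _ _ [x []]; rewrite /F.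
  have nAB : forall y, A y -> B y -> False.
    by move=> y Ay By; have : (A `&` B) y by []; rewrite AB.
  case: i => [|[|i]]; case: j => [|[|j]] //= h1 h2.
  - by case: (nAB x).
  - by case: (nAB x).
have UF : \bigcup_k F k = A `|` B.
  apply/seteqP; split => x.
    by case=> -[|[|k]] _ //=; [left|right].
  by case=> h; [exists 0%N|exists 1%N].
have := sadd F bF tF; rewrite UF => H.
apply: (cvg_unique (@ereal_hausdorff R) H).
apply: cvg_near_cst; near=> k.
have k2 : (2 <= k)%N by near: k; exists 2%N.
rewrite (big_cat_nat _ k2) //= big_nat_recr //= big_nat1 /F /=.
rewrite big1_seq ?adde0 //.
move=> i /andP[_]; rewrite mem_index_iota => /andP[hi _].
by case: i hi => [|[|i]] //= _; rewrite mu0.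
Unshelve. all: by end_near.
Qed.

Lemma mu_null_I (U1 U2 : set X) : open U1 -> open U2 ->
  mu (~` U1) = 0%E -> mu (~` U2) = 0%E -> mu (~` (U1 `&` U2)) = 0%E.
Proof.
move=> o1 o2 h1 h2.
have mupos : forall E, borel E -> (0 <= mu E)%E by case: hmu => -[].
have b1 := borel_C (borel_open o1); have b2 := borel_C (borel_open o2).
have b1' := borel_open o1.
have e2 : ~` U2 = (~` U2 `&` ~` U1) `|` (~` U2 `&` U1).
  by rewrite -setIUr [~` U1 `|` _]setUC setUCr setIT.
have d2 : (~` U2 `&` ~` U1) `&` (~` U2 `&` U1) = set0.
  by rewrite setIACA setIid setICl setI0.
have hs : (mu (~` U2 `&` ~` U1) + mu (~` U2 `&` U1) = 0)%E.
  by move: h2; rewrite {1}e2 mu_add2 //; exact: borel_I.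
have /andP[_ /eqP z] : (mu (~` U2 `&` ~` U1) == 0%E) && (mu (~` U2 `&` U1) == 0%E).
  rewrite -padde_eq0 ?hs //; apply: mupos; exact: borel_I.
have -> : ~` (U1 `&` U2) = ~` U1 `|` (~` U2 `&` U1).
  rewrite setCI; apply/seteqP; split => x /=.
    by case=> h; [left|have [?|?] := pselect (U1 x); [right|left]].
  by case=> [?|[]]; [left|right].
rewrite mu_add2 ?h1 ?z ?adde0 //; last by rewrite setIC -setIA setICr setI0.
exact: borel_I.
Qed.

End Measure.

Set Implicit Arguments.
Unset Strict Implicit.
Unset Printing Implicit Defensive.
Set Implicit Arguments.
Unset Strict Implicit.
Unset Printing Implicit Defensive.

Lemma nbhs_seq (X : topologicalType) (x : X) (J : eqType) (s : seq J) (W : J -> set X) :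
  (forall j, nbhs x (W j)) -> nbhs x [set y | forall j, j \in s -> W j y].
Proof.
move=> hW; elim: s => [|j s IH] /=.
  by apply: nearW => y j; rewrite in_nil.
apply: (filterS _ (filterI (hW j) IH)) => y [h1 h2] i.
by rewrite in_cons => /orP[/eqP->|/h2].
Qed.

Section Semialg.
Variables (R : realType) (I : Type).

Lemma semialg0 : semialgebraic (set0 : set (I -> R)).
Proof.
have -> : (set0 : set (I -> R)) = [set x | 0 < (fun _ => 0 : R) x].
  by apply/seteqP; split => x //=; rewrite ltxx.
exact/semialg_basic/polyfun_const.
Qed.

Lemma semialgI (S T : set (I -> R)) : semialgebraic S -> semialgebraic T ->
  semialgebraic (S `&` T).
Proof.
move=> hS hT; rewrite -[S `&` T]setCK setCI.
by apply: semialg_compl; apply: semialg_union; apply: semialg_compl.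
Qed.

Lemma semialg_seq (J : eqType) (s : seq J) (S : J -> set (I -> R)) :
  (forall j, semialgebraic (S j)) ->
  semialgebraic [set z | exists2 j, j \in s & S j z].
Proof.
move=> hS; elim: s => [|j s IH].
  have -> : [set z | exists2 j0, j0 \in [::] & S j0 z] = set0.
    by apply/seteqP; split => z //= [j0]; rewrite in_nil.
  exact: semialg0.
have -> : [set z | exists2 j0, j0 \in j :: s & S j0 z] =
  S j `|` [set z | exists2 j0, j0 \in s & S j0 z].
  apply/seteqP; split => z /=.
    by case=> j0; rewrite in_cons => /orP[/eqP->|h]; [left|right; exists j0].
  by case=> [h|[j0 h1 h2]]; [exists j; rewrite ?mem_head|exists j0; rewrite // in_cons h1 orbT].
exact: semialg_union.
Qed.

End Semialg.

Section TypeII.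
Variables (R : realType) (G : topologicalType) (p n : nat) (iota : G -> 'M[R]_n).
Local Notation X := (gpow G p).

Definition tII (T : Type) (f : X -> T) : Prop :=
  lfv f /\
  forall (a : T) (x : X), exists2 V, nbhs x V &
    exists2 S : set ('I_p * 'I_n * 'I_n -> R), semialgebraic S &
      V `&` f @^-1` [set a] = V `&` [set y | S (gcoords iota y)].

Lemma tII_comb (T1 T2 : choiceType) (T3 : Type) (u : X -> T1) (v : X -> T2)
  (F : T1 -> T2 -> T3) :
  tII u -> tII v -> tII (fun x => F (u x) (v x)).
Proof.
move=> [lu hu] [lv hv]; split; first exact: lfv_comb.
move=> a x.
have [U1 nU1 /finite_seqP[s1 e1]] := lu x.
have [U2 nU2 /finite_seqP[s2 e2]] := lv x.
have /choice[fu hfu] : forall b, exists VS : set X * set ('I_p * 'I_n * 'I_n -> R),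
   [/\ nbhs x VS.1, semialgebraic VS.2 &
    VS.1 `&` u @^-1` [set b] = VS.1 `&` [set y | VS.2 (gcoords iota y)]].
  by move=> b; have [V nV [S sS eS]] := hu b x; exists (V, S).
have /choice[fv hfv] : forall c, exists VS : set X * set ('I_p * 'I_n * 'I_n -> R),
   [/\ nbhs x VS.1, semialgebraic VS.2 &
    VS.1 `&` v @^-1` [set c] = VS.1 `&` [set y | VS.2 (gcoords iota y)]].
  by move=> c; have [V nV [S sS eS]] := hv c x; exists (V, S).
exists (U1 `&` U2 `&` [set y | forall b, b \in s1 -> (fu b).1 y]
           `&` [set y | forall c, c \in s2 -> (fv c).1 y]).
  apply: filterI; first apply: filterI; first exact: filterI.
    by apply: (@nbhs_seq _ x _ s1 (fun j => (fu j).1)) => j; case: (hfu j).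
  by apply: (@nbhs_seq _ x _ s2 (fun j => (fv j).1)) => j; case: (hfv j).
exists [set z | exists2 bc, bc \in [seq (b, c) | b <- s1, c <- s2] &
  (if pselect (F bc.1 bc.2 = a) then (fu bc.1).2 `&` (fv bc.2).2 else set0) z].
  apply: semialg_seq => -[b c] /=; destruct (pselect (F b c = a)); last exact: semialg0.
  by apply: semialgI; [case: (hfu b)|case: (hfv c)].
have mem1 : forall y, U1 y -> u y \in s1.
  by move=> y U1y; have : [set` s1] (u y) by rewrite -e1; exists y.
have mem2 : forall y, U2 y -> v y \in s2.
  by move=> y U2y; have : [set` s2] (v y) by rewrite -e2; exists y.
apply/seteqP; split => y [[[[U1y U2y] Wu] Wv] Hy]; split => //=.
- exists (u y, v y); first by apply: allpairs_f; [exact: mem1|exact: mem2].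
  rewrite /=; destruct (pselect (F (u y) (v y) = a)) => //; split.
    case: (hfu (u y)) => _ _ eu.
    have hh : ((fu (u y)).1 `&` u @^-1` [set u y]) y.
      by split => //; apply: Wu; exact: mem1.
    by move: hh; rewrite eu => -[].
  case: (hfv (v y)) => _ _ ev.
  have hh : ((fv (v y)).1 `&` v @^-1` [set v y]) y.
    by split => //; apply: Wv; exact: mem2.
  by move: hh; rewrite ev => -[].
- case: Hy => -[b c] /allpairsP[[b' c'] [hb hc [-> ->]]] /=.
  destruct (pselect (F b' c' = a)) as [Fa|] => //; case=> Sb Tc.
  case: (hfu b') => _ _ eu; case: (hfv c') => _ _ ev.
  have hh : ((fu b').1 `&` [set y | (fu b').2 (gcoords iota y)]) y.
    by split => //; exact: Wu.
  move: hh; rewrite -eu => -[_ ->].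
  have hh : ((fv c').1 `&` [set y | (fv c').2 (gcoords iota y)]) y.
    by split => //; exact: Wv.
  by move: hh; rewrite -ev => -[_ ->].
Qed.

End TypeII.

Set Implicit Arguments.
Unset Strict Implicit.
Unset Printing Implicit Defensive.
Set Implicit Arguments.
Unset Strict Implicit.
Unset Printing Implicit Defensive.

Lemma arch_inv (R : realType) (e : R) : 0 < e -> exists N : nat, N.+1%:R^-1 < e.
Proof.
move=> e0; have [N _ hN] := near_infty_natSinv_lt (PosNum e0).
by exists N; exact: (hN N (leqnn N)).
Qed.

Lemma prod_nb (T1 T2 T3 : topologicalType) (f : T1 * T2 -> T3) (a : T1) (b : T2)
  (S : set T3) : {for (a, b), continuous f} -> nbhs (f (a, b)) S ->
  exists Q, exists V, [/\ nbhs a Q, nbhs b V &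
     forall x y, Q x -> V y -> S (f (x, y))].
Proof.
move=> cf nS; have := cf _ nS; case=> -[Q V] /= [nQ nV] sub.
by exists Q, V; split => // x y Qx Vy; exact: (sub (x, y)).
Qed.

Section Zmod.
Variable A : topologicalZmodType.

Lemma nb_transl (c y0 : A) (S : set A) : nbhs (y0 + c) S ->
  nbhs y0 [set y | S (y + c)].
Proof.
move=> nS; have [Q [V [nQ nV h]]] := prod_nb (@add_continuous A (y0, c)) nS.
apply: filterS nQ => y Qy; apply: h => //; exact: nbhs_singleton.
Qed.

Lemma nb_transl_sub (c y0 : A) (S : set A) : nbhs (y0 - c) S ->
  nbhs y0 [set y | S (y - c)].
Proof.
move=> nS; have [Q [V [nQ nV h]]] := prod_nb (@sub_continuous A (y0, c)) nS.
apply: filterS nQ => y Qy; apply: h => //; exact: nbhs_singleton.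
Qed.

Lemma nb_transl0 (y0 : A) (S : set A) : nbhs y0 S ->
  nbhs (0 : A) [set u | S (y0 + u)].
Proof.
move=> nS; have nS' : nbhs (0 + y0) S by rewrite add0r.
by apply: filterS (nb_transl nS') => u /=; rewrite addrC.
Qed.

End Zmod.

Section PCsec.
Variables (R : realType) (A : topologicalZmodType) (d : A -> A -> R).
Hypotheses (dc : compatible_metric d) (dcomp : complete_metric d).

Lemma d_ge0 x y : 0 <= d x y. Proof. by case: dc. Qed.
Lemma d_sym x y : d x y = d y x. Proof. by case: dc. Qed.
Lemma d_tri x y z : d x z <= d x y + d y z. Proof. by case: dc. Qed.
Lemma d_xx x : d x x = 0. Proof. by case: dc => _ h _ _ _; apply/h. Qed.

Lemma d_ball x e : 0 < e -> nbhs x [set y | d x y < e].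
Proof. by case: dc => _ _ _ _ h e0; apply/h; exists e. Qed.

Lemma d_nbhs x U : nbhs x U -> exists2 e : R, 0 < e & [set y | d x y < e] `<=` U.
Proof. by case: dc => _ _ _ _ h /h. Qed.

Lemma d_cvg (u : nat -> A) l :
  (forall e : R, 0 < e -> exists N, forall k, (N <= k)%N -> d (u k) l < e) ->
  u @ \oo --> l.
Proof.
move=> H U /d_nbhs[e e0 sub]; have [N hN] := H e e0.
by exists N => // k /= /hN; rewrite d_sym => /sub.
Qed.

Lemma JC (w : A) (e : R) : 0 < e -> exists Q, exists V,
  [/\ nbhs w Q, nbhs (0 : A) V & forall w' v, Q w' -> V v -> d w' (w' + v) < e].
Proof.
move=> e0; have e2 : 0 < e / 2 by rewrite divr_gt0.
have nb : nbhs ((fun z : A * A => z.1 + z.2) (w, 0)) [set z | d w z < e / 2].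
  by rewrite /= addr0; exact: d_ball.
have [Q [V [nQ nV h]]] := prod_nb (@add_continuous A (w, 0)) nb.
exists (Q `&` [set z | d w z < e / 2]), V; split => //.
  by apply: filterI => //; exact: d_ball.
move=> w' v [Qw' dw'] Vv; have := h _ _ Qw' Vv => /= h2.
have dw'' : d w' w < e / 2 by rewrite d_sym.
have := d_tri w' w (w' + v).
lra.
Qed.

Variable a : nat -> A.
Hypothesis cg : forall V, nbhs (0 : A) V ->
  exists N, forall m k, (N <= m)%N -> (N <= k)%N -> V (a m - a k).

Definition osc (y : A) (e : R) := exists N, forall m k, (N <= m)%N -> (N <= k)%N ->
  d (y + a m) (y + a k) < e.

Lemma PC_step (y0 : A) (r0 eps del : R) : 0 < r0 -> 0 < eps -> 0 < del ->
  exists y1, exists r1, [/\ 0 < r1, r1 <= del, d y0 y1 + r1 <= r0 &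
    forall y', d y1 y' < 2 * r1 -> osc y' eps].
Proof.
move=> r00 eps0 del0.
have r2 : 0 < r0 / 2 by rewrite divr_gt0.
have nU : nbhs (0 : A) [set u | d y0 (y0 + u) < r0 / 2].
  by apply: (nb_transl0 (S := [set z | d y0 z < r0 / 2])); exact: d_ball.
have [N0 hN0] := cg nU.
have e2 : 0 < eps / 2 by rewrite divr_gt0.
have [Q [V [nQ nV hQV]]] := JC (y0 + a N0) e2.
have [N1 hN1] := cg nV.
set N := maxn N0 N1.
set y1 := y0 + (a N0 - a N).
have nQ' : nbhs y1 [set y | Q (y + a N)].
  apply: nb_transl; suff -> : y1 + a N = y0 + a N0 by [].
  by rewrite /y1 -addrA subrK.
have [rho rho0 hrho] := d_nbhs nQ'.
have dy1 : d y0 y1 < r0 / 2 by apply: hN0 => //; rewrite leq_maxl.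
exists y1, (Num.min (rho / 2) (Num.min del (r0 / 2))); split.
- by rewrite !lt_min divr_gt0 //= del0 r2.
- by rewrite !ge_min lexx orbT.
- have : Num.min (rho / 2) (Num.min del (r0 / 2)) <= r0 / 2 by rewrite !ge_min lexx !orbT.
  lra.
- move=> y' hy'.
  have Qy' : Q (y' + a N).
    apply: hrho => /=; apply: (lt_le_trans hy').
    have : Num.min (rho / 2) (Num.min del (r0 / 2)) <= rho / 2 by rewrite ge_min lexx.
    lra.
  exists N => m k hm hk.
  have hV : forall j, (N <= j)%N -> d (y' + a N) (y' + a j) < eps / 2.
    move=> j hj.
    have -> : y' + a j = (y' + a N) + (a j - a N) by rewrite -addrA [a N + _]addrC subrK.
    apply: hQV => //; apply: hN1.
      by apply: leq_trans hj; rewrite leq_maxr.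
    by rewrite leq_maxr.
  have := d_tri (y' + a m) (y' + a N) (y' + a k).
  have := hV m hm; have := hV k hk; rewrite [d _ (y' + a m)]d_sym; lra.
Qed.

Lemma PCl : exists l : A, a n @[n --> \oo] --> l.
Proof.
have hstep : forall st : (A * R) * nat, exists st' : A * R,
  0 < st.1.2 -> [/\ 0 < st'.2, st'.2 <= st.2.+1%:R^-1, d st.1.1 st'.1 + st'.2 <= st.1.2 &
    forall y', d st'.1 y' < 2 * st'.2 -> osc y' st.2.+1%:R^-1].
  move=> [[y0 r0] j]; have [r0p|r0n] := boolP (0 < r0).
    have i0 : 0 < j.+1%:R^-1 :> R by rewrite invr_gt0 ltr0n.
    have [y1 [r1 H]] := PC_step y0 r0p i0 i0.
    by exists (y1, r1) => _.
  by exists (y0, r0).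
have [g hg] := choice hstep.
pose ys := fix ys j := if j is j'.+1 then g (ys j', j') else ((0 : A), (1 : R)).
have pos : forall j, 0 < (ys j).2.
  by elim=> [|j IH] //=; have [] := hg (ys j, j) IH.
have H j := hg (ys j, j) (pos j).
have tele : forall t j, d (ys j).1 (ys (j + t)%N).1 + (ys (j + t)%N).2 <= (ys j).2.
  elim=> [|t IH] j; first by rewrite addn0 d_xx add0r.
  rewrite addnS /=; have [_ _ h _] := H (j + t)%N.
  have := d_tri (ys j).1 (ys (j + t)%N).1 (g (ys (j + t)%N, (j + t)%N)).1.
  have := IH j; lra.
have rsmall : forall j, (ys j.+1).2 <= j.+1%:R^-1 by move=> j; case: (H j).
have hosc : forall j y', d (ys j.+1).1 y' < 2 * (ys j.+1).2 -> osc y' j.+1%:R^-1.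
  by move=> j; case: (H j).
clearbody ys.
have [y hy] : exists y, forall e : R, 0 < e ->
    exists N, forall k, (N <= k)%N -> d (ys k).1 y < e.
  apply: dcomp => e e0.
  have [N hN] := arch_inv (divr_gt0 e0 (ltr0n R 2)).
  exists N.+1 => m k hm hk.
  have t1 := tele (m - N.+1)%N N.+1; have t2 := tele (k - N.+1)%N N.+1.
  rewrite subnKC // in t1; rewrite subnKC // in t2.
  have := d_tri (ys m).1 (ys N.+1).1 (ys k).1.
  have := pos m; have := pos k; have := rsmall N.
  rewrite d_sym in t1; move: hN; set r := N.+1%:R^-1; move=> hN; lra.
have yin : forall j, d (ys j.+1).1 y < 2 * (ys j.+1).2.
  move=> j; have [N hN] := hy _ (pos j.+1).
  have := hN (maxn N j.+1) (leq_maxl _ _).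
  have t := tele (maxn N j.+1 - j.+1)%N j.+1.
  rewrite subnKC ?leq_maxr // in t.
  have := d_tri (ys j.+1).1 (ys (maxn N j.+1)).1 y.
  have := pos (maxn N j.+1); lra.
have oscy : forall j, osc y j.+1%:R^-1.
  by move=> j; apply: hosc; exact: yin.
have [z hz] : exists z, forall e : R, 0 < e ->
    exists N, forall k, (N <= k)%N -> d (y + a k) z < e.
  apply: dcomp => e e0; have [j hj] := arch_inv e0.
  have [N hN] := oscy j; exists N => m k hm hk.
  by apply: lt_trans hj; exact: hN.
exists (z - y) => U nU.
have nU' : nbhs z [set b | U (b - y)] by exact: nb_transl_sub.
have hc := d_cvg hz; case: (hc _ nU') => N _ hN.
by exists N => // k /hN /=; rewrite [y + _]addrC addrK.
Qed.

End PCsec.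

Set Implicit Arguments.
Unset Strict Implicit.
Unset Printing Implicit Defensive.
Set Implicit Arguments.
Unset Strict Implicit.
Unset Printing Implicit Defensive.

Lemma seq_bound (s : seq nat) : exists j, forall i, i \in s -> (i < j)%N.
Proof.
elim: s => [|x s [j hj]]; first by exists 0%N.
exists (maxn x.+1 j) => i; rewrite in_cons => /orP[/eqP->|/hj h].
  by rewrite leq_max leqnn.
by rewrite leq_max h orbT.
Qed.

Section ExhG.
Variable G : topologicalType.
Hypotheses (sc : @second_countable G) (lc : locally_compact [set: G]).

Lemma exhaustG : exists KG : nat -> set G,
  [/\ forall j, compact (KG j), forall j j', (j <= j')%N -> KG j `<=` KG j' &
      forall K, compact K -> exists j, K `<=` KG j].
Proof.
case: sc => B cB [Bo Bb].
pose BC := [set b | B b /\ compact (closure b)].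
have /countable_injP[inj injB] := cB.
have /choice[e he] : forall i : nat, exists b : set G,
    (b = set0 \/ BC b) /\ (forall b0, BC b0 -> inj b0 = i -> b = b0).
  move=> i; have [[b0 [BCb0 eb0]]|nex] := pselect (exists b0, BC b0 /\ inj b0 = i).
    exists b0; split; first by right.
    move=> b1 BCb1 eb1; apply: injB.
    - exact: (mem_set (proj1 BCb0)).
    - exact: (mem_set (proj1 BCb1)).
    - by rewrite eb0 eb1.
  exists set0; split; first by left.
  by move=> b1 BCb1 eb1; exfalso; apply: nex; exists b1.
have eP : forall i, e i = set0 \/ BC (e i) by move=> i; case: (he i).
have eB : forall b, BC b -> e (inj b) = b.
  by move=> b BCb; case: (he (inj b)) => _; apply.
have ce : forall i, compact (closure (e i)).
  by move=> i; case: (eP i) => [->|[]//]; rewrite closure0; exact: compact0.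
have oe : forall i, open (e i).
  by move=> i; case: (eP i) => [->|[/Bo]//]; exact: open0.
pose KG j := [set x | exists2 i, (i < j)%N & closure (e i) x].
exists KG; split.
- elim=> [|j IH].
    have -> : KG 0%N = set0 by apply/seteqP; split => x // [].
    exact: compact0.
  have -> : KG j.+1 = KG j `|` closure (e j).
    apply/seteqP; split => x.
      move=> [i]; rewrite ltnS leq_eqVlt => /orP[/eqP->|hi] hx; first by right.
      by left; exists i.
    by case=> [[i hi hx]|hx]; [exists i => //; exact: ltnW|exists j].
  exact: compactU.
- by move=> j j' hj x [i hi hx]; exists i => //; exact: leq_trans hj.
- move=> K /compact_near_coveringP cK.
  have : \forall j \near \oo, K `<=` KG j.
    apply: (cK nat \oo (fun j x => KG j x)) => x Kx.
    have [U nU [cU clU]] := @lc x I.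
    rewrite withinET in nU.
    have [b [Bb0 bx] sub] := Bb x U nU.
    have BCb : BC b.
      split => //; apply: (subclosed_compact _ cU) => //; first exact: closed_closure.
      by rewrite (closure_id U).1 //; exact: closure_subset.
    exists (b, [set j | (inj b < j)%N]).
      split => /=; first by apply: open_nbhs_nbhs; split => //; exact: Bo.
      by exists (inj b).+1.
    move=> [x' j] /= [bx' hj]; exists (inj b) => //; rewrite eB //.
    exact: subset_closure.
  by case=> N _ hN; exists N; exact: (hN N (leqnn N)).
Qed.

End ExhG.

Lemma exhaustGp (G : topologicalType) (p : nat) :
  @second_countable G -> locally_compact [set: G] ->
  exists K : nat -> set (gpow G p),
  [/\ forall j, compact (K j), forall j j', (j <= j')%N -> K j `<=` K j' &
      forall C, compact C -> exists j, C `<=` K j].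
Proof.
move=> sc lc; have [KG [cKG mKG aKG]] := exhaustG sc lc.
exists (fun j => [set x : gpow G p | forall i, KG j (x i)]); split.
- move=> j; exact: (@tychonoff 'I_p (fun _ => G) (fun _ => KG j) (fun _ => cKG j)).
- by move=> j j' hj x hx i; exact: (mKG _ _ hj).
- move=> C cC.
  have hi : forall i : 'I_p, exists j, (fun y : gpow G p => y i) @` C `<=` KG j.
    move=> i; apply: aKG; apply: continuous_compact => //.
    apply: continuous_subspaceT => y.
    exact: (@proj_continuous 'I_p (fun _ => G) i y).
  have /choice[js hjs] := hi.
  have [J hJ] := seq_bound [seq js i | i <- enum 'I_p].
  exists J => x Cx i; apply: (mKG (js i)); first by apply: ltnW; apply: hJ; apply: map_f; rewrite mem_enum.
  by apply: hjs; exists x.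
Qed.

Set Implicit Arguments.
Unset Strict Implicit.
Unset Printing Implicit Defensive.
Set Implicit Arguments.
Unset Strict Implicit.
Unset Printing Implicit Defensive.


Lemma lim_uniq (R : realType) (C : topologicalZmodType) (d : C -> C -> R)
  (dc : compatible_metric d) (u : nat -> C) (l1 l2 : C) :
  u n @[n --> \oo] --> l1 -> u n @[n --> \oo] --> l2 -> l1 = l2.
Proof.
move=> h1 h2; have [_ deq _ _ _] := dc.
apply/(deq _ _); apply/eqP; rewrite eq_le (d_ge0 dc) andbT; apply/negP => /negP.
rewrite -ltNge => dp.
have e0 : 0 < d l1 l2 / 2 by rewrite divr_gt0.
have [N1 _ hN1] := h1 _ (d_ball dc l1 e0).
have [N2 _ hN2] := h2 _ (d_ball dc l2 e0).
have a1 := hN1 (maxn N1 N2) (leq_maxl _ _).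
have a2 := hN2 (maxn N1 N2) (leq_maxr _ _).
move: a1 a2 => /= a1 a2.
have := d_tri dc l1 (u (maxn N1 N2)) l2; rewrite [d (u _) l2](d_sym dc); lra.
Qed.

Unset Implicit Arguments.
Section Main.
Variables (R : realType) (X : topologicalType) (A C : topologicalZmodType).
Variables (q : A -> C) (dA : A -> A -> R) (dC : C -> C -> R).
Hypotheses (qm : quotient_map q) (dAc : compatible_metric dA)
  (dAcomp : complete_metric dA) (dCc : compatible_metric dC).
Variable K : nat -> set X.
Hypotheses (cK : forall j, compact (K j))
  (mK : forall j j', (j <= j')%N -> K j `<=` K j')
  (aK : forall Y, compact Y -> exists j, Y `<=` K j).
Variables (PA : (X -> A) -> Prop) (PC : (X -> C) -> Prop).
Hypotheses (hlift : forall g (s : C -> A), PC g -> PA (fun x => s (g x)))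
  (hstep : forall h g g' (F : A -> C -> C -> A), PA h -> PC g -> PC g' ->
     PA (fun x => F (h x) (g x) (g' x))).

Lemma qB a b : q (a - b) = q a - q b.
Proof. by have := qm; rewrite /quotient_map => -[h _ _ _]; exact: h. Qed.
Lemma q0 : q 0 = 0. Proof. by have := qB 0 0; rewrite !subrr. Qed.
Lemma qN a : q (- a) = - q a. Proof. by rewrite -sub0r qB q0 sub0r. Qed.
Lemma qD a b : q (a + b) = q a + q b.
Proof. by rewrite -{1}[b]opprK qB qN opprK. Qed.

Lemma half_nbhs (V : set A) : nbhs (0 : A) V -> exists U : set A,
  [/\ nbhs (0 : A) U, forall u, U u -> U (- u) & forall u v, U u -> U v -> V (u + v)].
Proof.
move=> nV; have nV' : nbhs ((fun z : A * A => z.1 + z.2) (0, 0)) V by rewrite /= addr0.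
have [Q [V' [nQ nV'' h]]] := prod_nb (@add_continuous A (0, 0)) nV'.
pose U0 := Q `&` V'.
have nU0 : nbhs (0 : A) U0 by exact: filterI.
have nU0' : nbhs (0 : A) [set u | U0 (- u)].
  have : nbhs (- (0 : A)) U0 by rewrite oppr0.
  exact: (@opp_continuous A 0).
exists [set u | U0 u /\ U0 (- u)]; split.
- exact: filterI.
- by move=> u [h1 h2]; split => //; rewrite opprK.
- by move=> u v [[Qu _] _] [[_ Vv] _]; exact: h.
Qed.

Lemma Wsys : exists W : nat -> set A,
  [/\ forall j, nbhs (0 : A) (W j), forall j w, W j w -> W j (- w),
      forall j u v, W j.+1 u -> W j.+1 v -> W j (u + v) &
      forall V, nbhs (0 : A) V -> exists j, W j `<=` V].
Proof.
have /choice[hf hhf] : forall V : set A, exists U : set A, nbhs (0 : A) V ->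
  [/\ nbhs (0 : A) U, forall u, U u -> U (- u) & forall u v, U u -> U v -> V (u + v)].
  move=> V; have [nV|nV] := pselect (nbhs (0 : A) V).
    by have [U hU] := half_nbhs V nV; exists U.
  by exists set0.
pose W := fix W j := if j is j'.+1 then
  hf (W j' `&` [set y | dA 0 y < j'.+1%:R^-1]) else setT.
have nW : forall j, nbhs (0 : A) (W j).
  elim=> [|j IH] /=; first exact: filterT.
  have := hhf (W j `&` [set y | dA 0 y < j.+1%:R^-1]); case.
    by apply: filterI => //; apply: (d_ball dAc); rewrite invr_gt0 ltr0n.
  by [].
have hW : forall j, [/\ forall u, W j.+1 u -> W j.+1 (- u) &
    forall u v, W j.+1 u -> W j.+1 v -> (W j `&` [set y | dA 0 y < j.+1%:R^-1]) (u + v)].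
  move=> j; have := hhf (W j `&` [set y | dA 0 y < j.+1%:R^-1]); case => //.
  by apply: filterI => //; apply: (d_ball dAc); rewrite invr_gt0 ltr0n.
exists W; split => //.
- by case=> [|j] w //; case: (hW j) => + _; apply.
- by move=> j u v Wu Wv; case: (hW j) => _ /(_ u v Wu Wv) [].
- move=> V /(d_nbhs dAc)[e e0 sub]; have [N hN] := arch_inv e0.
  exists N.+1 => w Ww; apply: sub => /=.
  case: (hW N) => _ /(_ w 0 Ww (nbhs_singleton (nW N.+1))) [_].
  by rewrite addr0 /= => h; apply: lt_trans hN.
Qed.

Lemma W_mono (W : nat -> set A) :
  (forall j, nbhs (0 : A) (W j)) ->
  (forall j u v, W j.+1 u -> W j.+1 v -> W j (u + v)) ->
  forall i j, (i <= j)%N -> W j `<=` W i.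
Proof.
move=> nW hW i j /subnK <-; elim: (j - i)%N => [|t IH] w //=.
rewrite addSn => Ww; apply: IH; rewrite -[w]addr0; apply: hW => //.
exact: nbhs_singleton.
Qed.

Theorem main_lift (gs : nat -> X -> C) (f : X -> C) :
  (forall k, PC (gs k)) -> locally_uniform_limit gs f ->
  exists fh : X -> A, (forall x, q (fh x) = f x) /\
    exists hs : nat -> X -> A, (forall k, PA (hs k)) /\ locally_uniform_limit hs fh.
Proof.
move=> PCg lul.
have [W [nW sW hW aW]] := Wsys.
have Wm := W_mono W nW hW.
have hZ : forall j, exists Z : set C, nbhs (0 : C) Z /\
    forall z z', Z z -> Z z' -> exists a, W j.+1 a /\ q a = z - z'.
  move=> j; have [Oo [oO O0] OW] : exists2 Oo : set A, open_nbhs 0 Oo & Oo `<=` W j.+1.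
    by have := nW j.+1; rewrite nbhsE => -[Oo hO sO]; exists Oo.
  have nqO : nbhs (0 : C) (q @` Oo).
    apply: open_nbhs_nbhs; split; first by have := qm; rewrite /quotient_map; case => _ _ _; apply.
    by exists 0 => //; exact: q0.
  have nqO' : nbhs ((fun z : C * C => z.1 - z.2) (0, 0)) (q @` Oo) by rewrite /= subr0.
  have [Q [V' [nQ nV' h]]] := prod_nb (@sub_continuous C (0, 0)) nqO'.
  exists (Q `&` V'); split; first exact: filterI.
  move=> z z' [Qz _] [_ Vz']; have [a Oa qa] := h _ _ Qz Vz'.
  by exists a; split => //; exact: OW.
have /choice[Z hZZ] := hZ.
have hN : forall j, exists N, forall m, (N <= m)%N -> forall x, K j x -> Z j (gs m x - f x).
  move=> j; have [nZ _] := hZZ j.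
  have [N _ hN] := lul (K j) (cK j) (Z j) nZ.
  by exists N => m hm x Kx; exact: (hN m hm x Kx).
have /choice[Nf hNf] := hN.
pose n := fix n j := if j is j'.+1 then maxn (maxn (n j') (Nf j)) j else Nf 0%N.
have nNf : forall j, (Nf j <= n j)%N.
  by case=> [|j] //=; rewrite !leq_max leqnn orbT.
have nS : forall j, (n j <= n j.+1)%N by move=> j /=; rewrite !leq_max leqnn.
have nmono : forall i j, (i <= j)%N -> (n i <= n j)%N.
  move=> i j /subnK <-; elim: (j - i)%N => [|t IH]; first by rewrite add0n.
  by rewrite addSn; apply: leq_trans IH (nS _).
have nge : forall j, (j <= n j)%N by case=> [|j] //=; rewrite leq_max leqnn orbT.
have /choice[sg hsg] : forall jc : nat * C, exists a, q a = jc.2 /\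
    ((exists b, W jc.1.+1 b /\ q b = jc.2) -> W jc.1.+1 a).
  move=> [j c] /=; have [[b [Wb qb]]|nex] := pselect (exists b, W j.+1 b /\ q b = c).
    by exists b.
  have := qm; rewrite /quotient_map => -[_ _ surj _]; have [a qa] := surj c.
  by exists a; split => // h; exfalso; apply: nex.
pose hs := fix hs k := if k is k'.+1 then
  (fun x => hs k' x + sg (k', gs (n k) x - gs (n k') x))
  else (fun x => sg (0%N, gs (n 0%N) x)).
have PAh : forall k, PA (hs k).
  elim=> [|k IH] /=; first exact: (hlift (gs (n 0%N)) (fun c => sg (0%N, c)) (PCg _)).
  exact: (hstep (hs k) (gs (n k)) (gs (n k.+1)) (fun a c c' => a + sg (k, c' - c)) IH (PCg _) (PCg _)).
have qh : forall k x, q (hs k x) = gs (n k) x.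
  elim=> [|k IH] x /=; first by case: (hsg (0%N, gs (n 0%N) x)).
  rewrite qD IH; case: (hsg (k, gs (n k.+1) x - gs (n k) x)) => /= -> _.
  by rewrite addrC subrK.
have incr : forall j k x, (j <= k)%N -> K j x ->
    W k.+1 (hs k.+1 x - hs k x).
  move=> j k x jk Kjx /=; rewrite addrC addKr.
  case: (hsg (k, gs (n k.+1) x - gs (n k) x)) => _; apply => /=.
  have Kkx : K k x by exact: (mK j k jk).
  have [_ hz] := hZZ k.
  have z1 : Z k (gs (n k.+1) x - f x).
    by apply: (hNf k) => //; apply: leq_trans (nNf k) (nS k).
  have z2 : Z k (gs (n k) x - f x) by exact: (hNf k).
  have [a [Wa qa]] := hz _ _ z1 z2; exists a; split => //.
  by rewrite qa opprB addrA subrK.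
have tail : forall j x, K j x -> forall t k, (j <= k)%N ->
    W k (hs (k + t).+1 x - hs k x).
  move=> j x Kjx; elim=> [|t IH] k jk.
    rewrite addn0; apply: (Wm k k.+1) => //; exact: (incr j).
  have -> : hs (k + t.+1).+1 x - hs k x =
      (hs (k.+1 + t).+1 x - hs k.+1 x) + (hs k.+1 x - hs k x).
    by rewrite addSnnS addrA subrK.
  apply: hW; first by apply: IH; exact: leqW.
  exact: (incr j).
have cauchy : forall j x, K j x -> forall V, nbhs (0 : A) V ->
    exists N, forall m k, (N <= m)%N -> (N <= k)%N -> V (hs m x - hs k x).
  move=> j x Kjx V nV; have [i Wi] := aW V nV.
  exists (maxn j i) => m k hm hk.
  have hj : forall k, (maxn j i <= k)%N -> (j <= k)%N /\ (i <= k)%N.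
    by move=> k' h; split; apply: leq_trans h; rewrite ?leq_maxl ?leq_maxr.
  have [km|mk|->] := ltngtP k m.
  - apply: Wi; have [jk ik] := hj k hk.
    apply: (Wm i k ik); have := tail j x Kjx (m - k.+1)%N k jk.
    by rewrite -addSn subnKC.
  - apply: Wi; have [jm im] := hj m hm.
    rewrite -opprB; apply: sW; apply: (Wm i m im).
    have := tail j x Kjx (k - m.+1)%N m jm.
    by rewrite -addSn subnKC.
  - by rewrite subrr; apply: Wi; exact: nbhs_singleton (nW i).
have hlim : forall x, exists l : A, hs k x @[k --> \oo] --> l.
  move=> x; have [j Kjx] := aK [set x] (@compact_set1 X x).
  exact: (@PCl _ _ dA dAc dAcomp (fun m => hs m x) (cauchy j x (Kjx x erefl))).
have /choice[fh hfh] := hlim.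
exists fh; split.
- move=> x; apply: (lim_uniq dCc (u := fun k => q (hs k x))).
    move=> U nU; have := qm; rewrite /quotient_map => -[_ qc _ _].
    have := hfh x _ (qc (fh x) _ nU); case=> N _ hN'.
    by exists N.
  move=> U nU.
  have nU' : nbhs (0 : C) [set c | U (c + f x)].
    by apply: (@nb_transl C (f x) 0 U); rewrite add0r.
  have [N _ hN2] := lul [set x] (@compact_set1 X x) _ nU'.
  exists N => // k hk; rewrite /= qh.
  have := hN2 (n k) (leq_trans hk (nge k)) x erefl.
  by rewrite /= subrK.
- exists hs; split => // K' cK' V nV.
  have [i Wi] := aW V nV; have [J KJ] := aK K' cK'.
  exists (maxn J i).+1 => // -[//|k] hk x K'x.
  have hJ : (J <= k)%N /\ (i <= k)%N.
    have hk' : (maxn J i <= k)%N by [].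
    by split; [exact: (leq_trans (leq_maxl J i) hk')|exact: (leq_trans (leq_maxr J i) hk')].
  have KJx := KJ x K'x.
  have nW' : nbhs (fh x) [set y | W k.+1 (y - fh x)].
    by apply: (@nb_transl_sub A (fh x) (fh x)); rewrite subrr; exact: nW.
  have [M _ hM] := hfh x _ nW'.
  have t := tail J x KJx (maxn M k.+2 - k.+2)%N k.+1 (leqW hJ.1).
  rewrite -addSn subnKC ?leq_maxr // in t.
  have e := hM (maxn M k.+2) (leq_maxl _ _).
  apply: Wi; apply: (Wm i k hJ.2).
  have -> : hs k.+1 x - fh x = (hs (maxn M k.+2) x - fh x) + - (hs (maxn M k.+2) x - hs k.+1 x).
    by rewrite opprB [in RHS]addrC [in RHS]addrA subrK.
  by apply: hW => //; exact: sW.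
Qed.

End Main.

Set Implicit Arguments.
Unset Strict Implicit.
Unset Printing Implicit Defensive.
Set Implicit Arguments.
Unset Strict Implicit.
Unset Printing Implicit Defensive.

Section TI.
Variables (R : realType) (X : topologicalType) (mul : X -> X -> X)
  (mu : set X -> \bar R).
Hypothesis hmu : haar_measure mul mu.

Definition tI (T : Type) (f : X -> T) : Prop :=
  lfv f /\ exists U : set X, [/\ open U, mu (~` U) = 0%E & lcon U f].

Lemma tI_comb (T1 T2 T3 : Type) (u : X -> T1) (v : X -> T2) (F : T1 -> T2 -> T3) :
  tI u -> tI v -> tI (fun x => F (u x) (v x)).
Proof.
move=> [lu [W1 [oW1 mW1 cW1]]] [lv [W2 [oW2 mW2 cW2]]]; split; first exact: lfv_comb.
exists (W1 `&` W2); split; first exact: openI.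
  exact: (mu_null_I hmu).
exact: lcon_comb.
Qed.
End TI.

Unset Implicit Arguments.
Unset Strict Implicit.

Theorem proposition3p4 (R : realType) (G : topologicalType)
  (mul : G -> G -> G) (inv : G -> G) (one : G) (p : nat)
  (A C : topologicalZmodType) (B : set A) (q : A -> C)
  (mu : set (gpow G p) -> \bar R) :
  lcsc_group mul inv one -> (1 <= p)%N ->
  polish R A -> polish R C ->
  closed B -> B = q @^-1` [set 0] -> quotient_map q ->
  haar_measure (@pmul G p mul) mu ->
  (forall f : gpow G p -> C,
     almost_regular (typeI mu) f (@pone G p one) ->
     exists fh : gpow G p -> A,
       (forall x, q (fh x) = f x) /\
       almost_regular (typeI mu) fh (@pone G p one))
  /\
  (forall (n : nat) (iota : G -> 'M[R]_n),
     algebraic_embedding mul iota ->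
     forall f : gpow G p -> C,
       almost_regular (@typeII R G p n iota C) f (@pone G p one) ->
       exists fh : gpow G p -> A,
         (forall x, q (fh x) = f x) /\
         almost_regular (@typeII R G p n iota A) fh (@pone G p one)).
Proof.
move=> [_ _ lc sc] _ [_ [dA [dAc dAcomp]]] [_ [dC [dCc _]]] _ _ qm hmu.
have [K [cK mK aK]] := exhaustGp p sc lc.
set x0 := @pone G p one.
split.
- move=> f [gs [Pg lul]].
  have hl : forall (g : gpow G p -> C) (s : C -> A), tI mu g /\ reg x0 g ->
      tI mu (fun x => s (g x)) /\ reg x0 (fun x => s (g x)).
    move=> g s [tg rg]; split.
      exact: (tI_comb hmu (fun c (_ : C) => s c) tg tg).
    exact: (reg_comb (fun c (_ : C) => s c) rg rg).
  have hst : forall h g g' (F : A -> C -> C -> A), tI mu h /\ reg x0 h ->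
      tI mu g /\ reg x0 g -> tI mu g' /\ reg x0 g' ->
      tI mu (fun x => F (h x) (g x) (g' x)) /\ reg x0 (fun x => F (h x) (g x) (g' x)).
    move=> h g g' F [th rh] [tg rg] [tg' rg']; split.
      have tw := tI_comb hmu (fun c c' => (c, c')) tg tg'.
      exact: (tI_comb hmu (fun a (cc : C * C) => F a cc.1 cc.2) th tw).
    have rw := reg_comb (fun c c' => (c, c')) rg rg'.
    exact: (reg_comb (fun a (cc : C * C) => F a cc.1 cc.2) rh rw).
  have [fh [hq [hs [Ph lh]]]] := @main_lift R (gpow G p) A C q dA dC qm dAc dAcomp dCc
    K cK mK aK (fun h => tI mu h /\ reg x0 h) (fun g => tI mu g /\ reg x0 g)
    hl hst gs f Pg lul.
  by exists fh; split => //; exists hs.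
- move=> n iota _ f [gs [Pg lul]].
  have hl : forall (g : gpow G p -> C) (s : C -> A), tII iota g /\ reg x0 g ->
      tII iota (fun x => s (g x)) /\ reg x0 (fun x => s (g x)).
    move=> g s [tg rg]; split.
      exact: (tII_comb (fun c (_ : C) => s c) tg tg).
    exact: (reg_comb (fun c (_ : C) => s c) rg rg).
  have hst : forall h g g' (F : A -> C -> C -> A), tII iota h /\ reg x0 h ->
      tII iota g /\ reg x0 g -> tII iota g' /\ reg x0 g' ->
      tII iota (fun x => F (h x) (g x) (g' x)) /\ reg x0 (fun x => F (h x) (g x) (g' x)).
    move=> h g g' F [th rh] [tg rg] [tg' rg']; split.
      have tw := tII_comb (fun c c' => (c, c')) tg tg'.
      exact: (tII_comb (fun a (cc : C * C) => F a cc.1 cc.2) th tw).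
    have rw := reg_comb (fun c c' => (c, c')) rg rg'.
    exact: (reg_comb (fun a (cc : C * C) => F a cc.1 cc.2) rh rw).
  have [fh [hq [hs [Ph lh]]]] := @main_lift R (gpow G p) A C q dA dC qm dAc dAcomp dCc
    K cK mK aK (fun h => tII iota h /\ reg x0 h) (fun g => tII iota g /\ reg x0 g)
    hl hst gs f Pg lul.
  by exists fh; split => //; exists hs.
Qed.
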